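(* Let $M$ be a right cancellative monoid and $\tau : X^* \to M$ a monoid choice of generators. Let $\varphi : \hat{X}^* \to H$ be the monoid morphism into the inverse hull $H$ of $M$ defined by $x\varphi = \rho_{x\tau}$ and $\overline{x}\varphi = \rho_{x\tau}^{-1}$ for $x \in X$. Then $L_\tau(M) = \{w \in \hat{X}^* : w\varphi \text{ is the identity of } H\}$.
   Context: Maps are written on the right. $X^*$ is the free monoid on $X$; a choice of generators is a surjective monoid morphism. Let $\overline{X} = \{\overline{x} : x \in X\}$ be new symbols, $\hat{X} = X \cup \overline{X}$. The loop automaton of $M$ w.r.t. $\tau$ has vertex set $M$, for each $a \in M$, $x \in X$ an edge $a \to a(x\tau)$ labelled $x$ and an edge $a(x\tau) \to a$ labelled $\overline{x}$; the loop problem $L_\tau(M) \subseteq \hat{X}^*$ is the set of labels of paths from the identity to the identity. For $m \in M$, $\rho_m : M \to M$, $a \mapsto am$, is injective by right cancellativity, with partial inverse $\rho_m^{-1} : Mm \to M$, $am \mapsto a$. The inverse hull $H$ of $M$ is the monoid of partial bijections of $M$ (under composition) generated by all $\rho_m$ and $\rho_m^{-1}$; its identity is the identity map of $M$. *)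

(* Defs.v *)
(* Maps are written on the right; partial maps M -> M are
   represented by their graphs (relations a b : "a is sent to b"). *)
From Stdlib Require Import List.
Import ListNotations.

(* The alphabet \hat X = X ∪ \overline X : inl x = x, inr x = \overline x. *)
Definition hatX (X : Type) : Type := (X + X)%type.

Fixpoint tau {M X : Type} (mul : M -> M -> M) (one : M) (g : X -> M)
  (w : list X) : M :=
  match w with
  | [] => one
  | x :: w' => mul (g x) (tau mul one g w')
  end.

Definition loop_edge {M X : Type} (mul : M -> M -> M) (g : X -> M)
  (s : M) (l : hatX X) (t : M) : Prop :=
  exists (a : M) (x : X),
    (s = a /\ l = inl x /\ t = mul a (g x)) \/
    (s = mul a (g x) /\ l = inr x /\ t = a).

Fixpoint loop_path {M X : Type} (mul : M -> M -> M) (g : X -> M)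
  (w : list (hatX X)) (s t : M) : Prop :=
  match w with
  | [] => s = t
  | l :: w' => exists c, loop_edge mul g s l c /\ loop_path mul g w' c t
  end.

Definition loop_problem {M X : Type} (mul : M -> M -> M) (one : M)
  (g : X -> M) (w : list (hatX X)) : Prop :=
  loop_path mul g w one one.

(* rho_m : a |-> a m, and its partial inverse rho_m^{-1} : M m -> M, a m |-> a. *)
Definition rho {M : Type} (mul : M -> M -> M) (m : M) (a b : M) : Prop :=
  b = mul a m.
Definition rho_inv {M : Type} (mul : M -> M -> M) (m : M) (a b : M) : Prop :=
  a = mul b m.

(* Composition of partial maps written on the right: (f g) = first f, then g. *)
Definition pcomp {M : Type} (f h : M -> M -> Prop) (a b : M) : Prop :=
  exists c, f a c /\ h c b.
Definition pid {M : Type} (a b : M) : Prop := a = b.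

Definition phi_letter {M X : Type} (mul : M -> M -> M) (g : X -> M)
  (l : hatX X) : M -> M -> Prop :=
  match l with
  | inl x => rho mul (g x)
  | inr x => rho_inv mul (g x)
  end.

Fixpoint phi {M X : Type} (mul : M -> M -> M) (g : X -> M)
  (w : list (hatX X)) : M -> M -> Prop :=
  match w with
  | [] => pid
  | l :: w' => pcomp (phi_letter mul g l) (phi mul g w')
  end.

(* Main.v *)
Require Import Defs.
From Stdlib Require Import List.

Section S.
Variables (M X : Type) (mul : M -> M -> M) (one : M)
  (mulA : forall a b c, mul a (mul b c) = mul (mul a b) c)
  (rcancel : forall a b c, mul a c = mul b c -> a = b)
  (g : X -> M).

Lemma edge_letter l s t : loop_edge mul g s l t <-> phi_letter mul g l s t.
Proof.
  split.
  - intros [a [x [[-> [-> ->]] | [-> [-> ->]]]]]; reflexivity.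
  - destruct l as [x|x]; simpl; unfold rho, rho_inv; intros H.
    + exists s, x; left; auto.
    + exists t, x; right; auto.
Qed.

Lemma path_phi w : forall s t, loop_path mul g w s t <-> phi mul g w s t.
Proof.
  induction w as [|l w IH]; simpl; intros s t.
  - unfold pid; tauto.
  - unfold pcomp; split; intros [c [H1 H2]]; exists c;
      split; try apply edge_letter; try apply IH; auto.
Qed.

Lemma phi_lmul w : forall s t c, phi mul g w s t -> phi mul g w (mul c s) (mul c t).
Proof.
  induction w as [|l w IH]; simpl; intros s t c.
  - unfold pid; intros ->; reflexivity.
  - intros [d [H1 H2]]; exists (mul c d); split; [|apply IH; auto].
    destruct l; simpl in *; unfold rho, rho_inv in *; subst; rewrite mulA; reflexivity.
Qed.

Lemma phi_func w : forall s t t', phi mul g w s t -> phi mul g w s t' -> t = t'.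
Proof.
  induction w as [|l w IH]; simpl; intros s t t'.
  - unfold pid; intros -> ->; reflexivity.
  - intros [d [H1 H2]] [d' [H1' H2']].
    assert (d = d').
    { destruct l; simpl in *; unfold rho, rho_inv in *; subst; auto.
      eapply rcancel; eauto. }
    subst; eauto.
Qed.
End S.

Theorem corollary7p7 (M X : Type) (mul : M -> M -> M) (one : M)
  (mulA : forall a b c, mul a (mul b c) = mul (mul a b) c)
  (mul1m : forall a, mul one a = a)
  (mulm1 : forall a, mul a one = a)
  (rcancel : forall a b c, mul a c = mul b c -> a = b)
  (g : X -> M)
  (tau_surj : forall m : M, exists w : list X, tau mul one g w = m) :
  forall w : list (hatX X),
    loop_problem mul one g w <->
    (forall a b : M, phi mul g w a b <-> pid a b).
Proof.
  intros w; unfold loop_problem; rewrite path_phi.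
  split.
  - intros H a b.
    assert (Ha : phi mul g w a a).
    { pose proof (phi_lmul M X mul mulA g w one one a H) as H'.
      rewrite mulm1 in H'; exact H'. }
    unfold pid; split.
    + intros Hb; symmetry; eapply phi_func; eauto.
    + intros <-; exact Ha.
  - intros H; apply H; reflexivity.
Qed.
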